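(* Let $K,T\subset\mathbb{R}^n$ be convex bodies and let $q=(q_1,\dots,q_m)$ be a closed $(K,T)$-Minkowski billiard trajectory with respect to the $K$-supporting hyperplanes $H_1,\dots,H_m$. Let $U$ be the inclusion-minimal linear subspace of $\mathbb{R}^n$ containing the outer unit normal vectors $n_K(q_1),\dots,n_K(q_m)$ normal to $H_1,\dots,H_m$. Then there is a selection $\{i_1,\dots,i_{\dim U+1}\}\subseteq\{1,\dots,m\}$ such that $\{q_{i_1},\dots,q_{i_{\dim U+1}}\}\in F(K)$.
   Context: A convex body is a compact convex set in $\mathbb{R}^n$ containing the origin in its interior. For a convex body $K$, $F(K)$ denotes the set of subsets of $\mathbb{R}^n$ which cannot be translated into the interior of $K$. For a convex set $C$ and $z\in\partial C$, $N_C(z)=\{v:\langle v,y-z\rangle\le 0\ \forall y\in C\}$. A closed polygonal curve $(q_1,\dots,q_m)$, $m\ge2$, always satisfies $q_j\ne q_{j+1}$ and $q_j\notin[q_{j-1},q_{j+1}]$ (indices mod $m$). A closed polygonal curve $q$ with vertices on $\partial K$ is a closed $(K,T)$-Minkowski billiard trajectory with respect to the $K$-supporting hyperplanes $H_1,\dots,H_m$ through $q_1,\dots,q_m$ if there are $p_1,\dots,p_m\in\partial T$, outer unit normals $n_K(q_j)\in N_K(q_j)$ normal to $H_j$, and $\mu_j\ge 0$ with $q_{j+1}-q_j\in N_T(p_j)$ and $p_{j+1}-p_j=-\mu_{j+1}n_K(q_{j+1})$ for all $j$. *)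

(* Defs.v *)
(* Points of R^n are row vectors 'rV[R]_n,
   R : realType, with the library's (product = Euclidean) topology. *)
From HB Require Import structures.
From mathcomp Require Import all_boot all_order all_algebra.
From mathcomp Require Import all_classical all_reals all_analysis.
Set Implicit Arguments. Unset Strict Implicit. Unset Printing Implicit Defensive.
Import Order.TTheory GRing.Theory Num.Theory.
Import numFieldNormedType.Exports.
Local Open Scope classical_set_scope.
Local Open Scope ring_scope.

Section Defs.
Variables (R : realType) (n : nat).
Notation vec := 'rV[R]_n.

Definition dotv (u v : vec) : R := \sum_(i < n) u 0 i * v 0 i.

Definition convex_set (C : set vec) : Prop :=
  forall x y, C x -> C y -> forall t : R, 0 <= t <= 1 ->
    C ((1 - t) *: x + t *: y).

Definition convex_body (K : set vec) : Prop :=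
  compact K /\ convex_set K /\ (interior K) 0.

Definition bdry (C : set vec) : set vec := closure C `\` interior C.

Definition F (K : set vec) : set (set vec) :=
  [set S | ~ exists t : vec, forall x, S x -> (interior K) (x + t)].

Definition normal_cone (C : set vec) (z : vec) : set vec :=
  [set v | forall y, C y -> dotv v (y - z) <= 0].

Definition in_segment (a b x : vec) : Prop :=
  exists t : R, 0 <= t <= 1 /\ x = (1 - t) *: a + t *: b.

Definition closed_polygonal_curve (m : nat) (q : 'I_m -> vec) : Prop :=
  (2 <= m)%N /\
  forall j : 'I_m, q j != q (ordS j) /\ ~ in_segment (q (ord_pred j)) (q (ordS j)) (q j).

(* q is a closed (K,T)-Minkowski billiard trajectory with respect to the
   K-supporting hyperplanes H_j = {x | <nK j, x - q j> = 0} through q_j,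
   where nK j is the outer unit normal of K at q_j normal to H_j. *)
Definition minkowski_billiard (K T : set vec) (m : nat) (q : 'I_m -> vec)
    (nK : 'I_m -> vec) : Prop :=
  closed_polygonal_curve q /\
  (forall j, bdry K (q j)) /\
  (forall j, normal_cone K (q j) (nK j) /\ dotv (nK j) (nK j) = 1) /\
  exists (p : 'I_m -> vec) (mu : 'I_m -> R),
    forall j : 'I_m,
      bdry T (p j) /\ 0 <= mu j /\
      normal_cone T (p j) (q (ordS j) - q j) /\
      p (ordS j) - p j = - (mu (ordS j) *: nK (ordS j)).

(* dimension of the minimal linear subspace containing the nK j:
   rank of the matrix whose rows are the nK j *)
Definition span_dim (m : nat) (nK : 'I_m -> vec) : nat :=
  \rank (\matrix_(j < m) nK j).

End Defs.

(* Main.v *)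
Require Import Defs.
From HB Require Import structures.
From mathcomp Require Import all_boot all_order all_algebra.
From mathcomp Require Import all_classical all_reals all_analysis.
From mathcomp Require Import ring lra zify.
Import Order.TTheory GRing.Theory Num.Theory.
Import numFieldNormedType.Exports.
Local Open Scope classical_set_scope.
Local Open Scope ring_scope.
Section Lems.
Variables (R : realType) (n : nat).
Notation vec := 'rV[R]_n.

Lemma dotv_suml (I : finType) (F : I -> vec) (t : vec) :
  dotv (\sum_j F j) t = \sum_j dotv (F j) t.
Proof.
rewrite /dotv; under eq_bigr => i _ do rewrite summxE big_distrl.
exact: exchange_big.
Qed.

Lemma dotvZl a (u v : vec) : dotv (a *: u) v = a * dotv u v.
Proof. by rewrite /dotv mulr_sumr; apply: eq_bigr => i _; rewrite mxE mulrA. Qed.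

Lemma dotvDr (u v w : vec) : dotv u (v + w) = dotv u v + dotv u w.
Proof. by rewrite /dotv -big_split; apply: eq_bigr => i _; rewrite mxE mulrDr. Qed.

Lemma dotvNr (u v : vec) : dotv u (- v) = - dotv u v.
Proof. by rewrite /dotv -sumrN; apply: eq_bigr => i _; rewrite mxE mulrN. Qed.

Lemma dotvZr a (u v : vec) : dotv u (a *: v) = a * dotv u v.
Proof. by rewrite /dotv mulr_sumr; apply: eq_bigr => i _; rewrite mxE mulrCA. Qed.

Lemma dotv0l (v : vec) : dotv 0 v = 0.
Proof. by rewrite /dotv big1 // => i _; rewrite mxE mul0r. Qed.

Lemma dotv_ge0 (u : vec) : 0 <= dotv u u.
Proof. by apply: sumr_ge0 => i _; rewrite -expr2 sqr_ge0. Qed.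

Lemma dotv_eq0 (u : vec) : dotv u u = 0 -> u = 0.
Proof.
move=> h; apply/rowP => i; rewrite mxE.
have h2 : \sum_(j < n) u 0 j ^+ 2 = 0.
  by rewrite -[RHS]h /dotv; apply: eq_bigr => j _; rewrite expr2.
have := @psumr_eq0P _ _ predT (fun j => u 0 j ^+ 2) (fun j _ => sqr_ge0 (u 0 j)) h2 i isT.
by move/eqP; rewrite sqrf_eq0 => /eqP.
Qed.

Lemma interior_dir (A : set 'rV[R]_n) (z v : 'rV[R]_n) :
  interior A z -> exists2 e : R, 0 < e & A (z + e *: v).
Proof.
move=> /nbhs_ballP [e e0 he].
exists (e / (`|v| + 1) / 2).
  by apply: divr_gt0 => //; apply: divr_gt0 => //; apply: ltr_pwDr.
apply: he; rewrite mx_norm_ball /ball_ /=.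
rewrite opprD addrA subrr add0r normrN normrZ.
have hv : 0 < `|v| + 1 by apply: ltr_pwDr.
rewrite ger0_norm; last by apply: divr_ge0 => //; apply: divr_ge0 => //; apply: ltW.
set w := `|v|.
have w0 : 0 <= w by apply: normr_ge0.
rewrite -[X in _ < X]mulr1 /=.
rewrite (_ : e / (w + 1) / 2 * w = e * (w / (w + 1) / 2)); last by field; rewrite gt_eqF.
rewrite ltr_pM2l // ltr_pdivrMr // ltr_pdivrMr // mul1r.
lra.
Qed.

Lemma nc_int_neg (K : set vec) (q nv t : vec) : normal_cone K q nv ->
  dotv nv nv = 1 -> interior K (q + t) -> dotv nv t < 0.
Proof.
move=> hnc hnn hint; have [e e0 he] := @interior_dir _ _ nv hint.
have := hnc _ he.
rewrite (_ : q + t + e *: nv - q = t + e *: nv); last by rewrite addrC !addrA addNr add0r.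
rewrite dotvDr dotvZr hnn mulr1 => h.
lra.
Qed.

Lemma nc_T (T : set vec) (p v : vec) : normal_cone T p v -> interior T 0 ->
  0 <= dotv v p /\ (dotv v p = 0 -> v = 0).
Proof.
move=> hnc hint; have [e e0 he] := @interior_dir _ _ v hint.
have := hnc _ he; rewrite add0r dotvDr dotvNr dotvZr => h.
have hv := dotv_ge0 v.
split; first by nra.
move=> hp; apply: dotv_eq0; rewrite hp in h; nra.
Qed.


Section LA.
Variables (m : nat) (nK : 'I_m -> vec).
Let M := \matrix_(j < m) nK j.

Lemma kernel_sub (S : {set 'I_m}) : (\rank M < #|S|)%N ->
  exists v : 'I_m -> R, (exists j, v j != 0) /\ (forall j, v j != 0 -> j \in S)
    /\ \sum_j v j *: nK j = 0.
Proof.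
move=> hS.
pose f : 'I_#|S| -> 'I_m := @enum_val _ (mem S).
pose N := rowsub f M.
have hN : (\rank N < #|S|)%N.
  by rewrite /N rowsubE; apply: leq_ltn_trans (mxrankM_maxr _ _) hS.
have hk : kermx N != 0 by rewrite kermx_eq0 -row_leq_rank -ltnNge.
pose w := nz_row (kermx N).
have hw0 : w != 0 by rewrite nz_row_eq0.
have hwN : w *m N = 0 by apply/sub_kermxP/nz_row_sub.
have finj : injective f by apply: enum_val_inj.
exists (fun j => \sum_(i | f i == j) w 0 i); split; last split.
- have /existsP [i hi] : [exists i, w 0 i != 0].
    apply: contraNT hw0 => /existsPn h; apply/eqP/rowP => j; rewrite mxE.
    by have := h j; rewrite negbK => /eqP.
  exists (f i); rewrite (big_pred1 i) // => i' /=.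
  by rewrite (inj_eq finj).
- move=> j; apply: contraR => hj; rewrite big_pred0 // => i.
  apply/negbTE; apply: contraNN hj => /eqP <-.
  exact: enum_valP.
- rewrite (_ : \sum_j _ = \sum_j \sum_i (if f i == j then w 0 i *: nK j else 0)); last first.
    by apply: eq_bigr => j _; rewrite scaler_suml big_mkcond.
  rewrite exchange_big /= -[RHS]hwN [RHS]mulmx_sum_row; apply: eq_bigr => i _.
  rewrite row_rowsub rowK -big_mkcond /= (big_pred1 (f i)) // => j.
Qed.

Lemma rank_lt (c : 'I_m -> R) : (exists j, c j != 0) ->
  \sum_j c j *: nK j = 0 -> (\rank M < m)%N.
Proof.
move=> [j hj] hs; rewrite ltn_neqAle rank_leq_row andbT.
apply/negP => /eqP hr.
have hf : row_free M by rewrite /row_free hr.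
have := mulmx_free_eq0 (\row_i c i) hf.
rewrite mulmx_sum_row.
under eq_bigr do rewrite mxE rowK.
rewrite hs eqxx => /esym/eqP/rowP/(_ j); rewrite !mxE => e.
by rewrite e eqxx in hj.
Qed.


Lemma carath (N : nat) (c : 'I_m -> R) : (#|[set j | c j != 0%R]%SET| <= N)%N ->
  (forall j, 0 <= c j) -> (exists j, c j != 0) -> \sum_j c j *: nK j = 0 ->
  exists c' : 'I_m -> R, (forall j, 0 <= c' j) /\ (exists j, c' j != 0) /\
    \sum_j c' j *: nK j = 0 /\ (#|[set j | c' j != 0%R]%SET| <= (\rank M).+1)%N.
Proof.
elim: N c => [|N IH] c hN hc hnz hs.
  case: hnz => j hj; move: hN; rewrite leqn0 => /eqP/card0_eq/(_ j).
  by move=> /negbT/negP []; rewrite inE.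
case: (leqP #|[set j | c j != 0]%SET| (\rank M).+1) => hle; first by exists c.
case: hnz => k hk.
set S := [set j | c j != 0]%SET :\ k.
have hkS : k \in [set j | c j != 0]%SET by rewrite inE.
have hcard := cardsD1 k [set j | c j != 0]%SET; rewrite inE hk -/S in hcard.
have hS : (\rank M < #|S|)%N.
  by move: hle; rewrite hcard add1n ltnS.
have [v [[j1 hj1] [hvS hvs]]] := kernel_sub S hS.
have [u [[j0 hj0] [huS hus]]] : exists u : 'I_m -> R, (exists j, 0 < u j) /\
    (forall j, u j != 0 -> j \in S) /\ \sum_j u j *: nK j = 0.
  case: (pselect (exists j, 0 < v j)) => hp; first by exists v.
  exists (fun j => - v j); split; [|split].
  - exists j1; rewrite oppr_gt0 lt_neqAle hj1 /= leNgt; apply/negP => h.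
    by apply: hp; exists j1.
  - by move=> j; rewrite oppr_eq0; apply: hvS.
  - under eq_bigr do rewrite scaleNr.
    by rewrite sumrN hvs oppr0.
have hu0 : forall j, j \notin S -> u j = 0.
  by move=> j hj; apply/eqP; exact: (contraNT (huS j) hj).
set i1 := [arg min_(i < j0 | 0 < u i) (c i / u i)]%O.
have [hi1 hmin] : 0 < u i1 /\ forall i, 0 < u i -> c i1 / u i1 <= c i / u i.
  by rewrite /i1; case: arg_minP => // i hi H; split => // i' /H.
set th := c i1 / u i1.
have th0 : 0 <= th by apply: divr_ge0 => //; apply: ltW.
have i1S : i1 \in S by apply: huS; rewrite gt_eqF.
apply: (IH (fun j => c j - th * u j)).
- have hsub : [set j | c j - th * u j != 0]%SET \subset [set j | c j != 0]%SET :\ i1.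
    apply/fintype.subsetP => j; rewrite !inE => hj; apply/andP; split.
      apply: contraNN hj => /eqP ->; rewrite /th divfK ?subrr //.
      by rewrite gt_eqF.
    apply: contraNN hj => /eqP hcj.
    have hjS : j \notin S by rewrite !inE hcj eqxx andbF.
    by rewrite hu0 // hcj mulr0 subrr.
  have i1c : c i1 != 0 by move: i1S; rewrite !inE => /andP [].
  have hc2 := cardsD1 i1 [set j | c j != 0]%SET; rewrite inE i1c in hc2.
  apply: leq_trans (subset_leq_card hsub) _.
  by move: hN; rewrite hc2 add1n ltnS.
- move=> j; case: (ltP 0 (u j)) => hu.
    rewrite subr_ge0 -ler_pdivlMr //; exact: hmin.
  have := hc j; nra.
- exists k; rewrite hu0; last by rewrite !inE eqxx.
  by rewrite mulr0 subr0.
- under eq_bigr do rewrite scalerBl -scalerA.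
  by rewrite sumrB -scaler_sumr hs hus scaler0 subr0.
Qed.

End LA.
End Lems.

Lemma pad (T : finType) (d : nat) (S : {set T}) : (#|S| + d <= #|T|)%N ->
  exists I : {set T}, S \subset I /\ #|I| = (#|S| + d)%N.
Proof.
elim: d S => [|d IH] S h.
  by exists S; split; [exact: subxx | rewrite addn0].
have : (0 < #|~: S|)%N by have := cardsC S; lia.
case/card_gt0P => x; rewrite finset.in_setC => hx.
have hc : (#|x |: S| + d <= #|T|)%N by rewrite cardsU1 hx; lia.
have [I [hsub hI]] := IH (x |: S) hc.
exists I; split; first by apply: fintype.subset_trans hsub; apply: finset.subsetUr.
by rewrite hI cardsU1 hx; lia.
Qed.

Theorem proposition3p10 (R : realType) (n : nat) (K T : set 'rV[R]_n)
    (m : nat) (q : 'I_m -> 'rV[R]_n) (nK : 'I_m -> 'rV[R]_n) :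
  convex_body K -> convex_body T ->
  minkowski_billiard K T q nK ->
  exists I : {set 'I_m},
    #|I| = (span_dim nK).+1 /\ F K (q @` [set i | i \in I]).
Proof.
move=> hK [_ [_ hT0]] [[hm2 hcq] [hbd [hnK [p [mu hpm]]]]].
have reidx : forall (F : 'I_m -> 'rV[R]_n), \sum_j F (ordS j) = \sum_j F j.
  by move=> G; rewrite [RHS](reindex_inj (@ordS_inj m)).
have hsum : \sum_j mu j *: nK j = 0.
  have h1 : \sum_j (p (ordS j) - p j) = 0 by rewrite sumrB reidx subrr.
  rewrite (eq_bigr _ (fun j _ => (hpm j).2.2.2)) sumrN in h1.
  by move/eqP: h1; rewrite oppr_eq0 (reidx (fun j => mu j *: nK j)) => /eqP.
have hmu0 j : 0 <= mu j := (hpm j).2.1.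
have m0 : (0 < m)%N by apply: leq_trans hm2.
pose i0 : 'I_m := Ordinal m0.
have hnz : exists j, mu j != 0.
  case: (pselect (exists j, mu j != 0)) => // hn; exfalso.
  have hz j : mu j = 0.
    have [//|h] := eqVneq (mu j) 0.
    by case: hn; exists j.
  have hp j : p (ordS j) = p j.
    by apply/eqP; rewrite -subr_eq0 (hpm j).2.2.2 hz scale0r oppr0.
  have hpc : forall k (hk : (k < m)%N), p (Ordinal hk) = p i0.
    elim => [|k IH] hk; first by congr p; apply: val_inj.
    have hk' : (k < m)%N by apply: ltnW.
    rewrite -(IH hk') -(hp (Ordinal hk')); congr p; apply: val_inj => /=.
    by rewrite modn_small.
  have hpc' j : p j = p i0 by case: j => k hk; exact: hpc.
  pose v j := q (ordS j) - q j.
  have hnc j : normal_cone T (p i0) (v j) by rewrite -(hpc' j); exact: (hpm j).2.2.1.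
  have hv j := @nc_T _ _ _ _ _ (hnc j) hT0.
  have hsv : \sum_j v j = 0 by rewrite sumrB reidx subrr.
  have hd : \sum_j dotv (v j) (p i0) = 0 by rewrite -dotv_suml hsv dotv0l.
  have hd0 := psumr_eq0P (fun j _ => (hv j).1) hd (i := i0) isT.
  have := (hv i0).2 hd0; move/eqP; rewrite subr_eq0 => /eqP e.
  by have := (hcq i0).1; rewrite e eqxx.
have [c [hc0 [hcnz [hcs hcard]]]] := @carath _ _ _ nK _ mu (leqnn _) hmu0 hnz hsum.
have hr : (span_dim nK < m)%N := @rank_lt _ _ _ nK mu hnz hsum.
have hle : (#|[set j | c j != 0%R]%SET| + ((span_dim nK).+1 - #|[set j | c j != 0%R]%SET|)
   <= #|'I_m|)%N.
  by rewrite card_ord subnKC.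
have [I [hsub hI]] := @pad _ _ _ hle.
exists I; split; first by rewrite hI subnKC.
move=> [t ht].
have hneg j : c j != 0 -> dotv (nK j) t < 0.
  move=> hj; apply: (@nc_int_neg _ _ K (q j) (nK j) t (hnK j).1 (hnK j).2).
  apply: ht; exists j => //=.
  by apply: (fintype.subsetP hsub); rewrite inE.
have := @dotv_suml _ _ _ (fun j => c j *: nK j) t.
rewrite hcs dotv0l.
under eq_bigr do rewrite dotvZl.
case: hcnz => j0 hj0.
rewrite (bigD1 j0) //=.
have h1 : c j0 * dotv (nK j0) t < 0.
  have := hneg j0 hj0; have := hc0 j0.
  rewrite le_eqVlt eq_sym (negbTE hj0) /=; nra.
have h2 : \sum_(i | i != j0) c i * dotv (nK i) t <= 0.
  apply: sumr_le0 => i _.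
  have [->|hi] := eqVneq (c i) 0; first by rewrite mul0r.
  have := hneg i hi; have := hc0 i; nra.
lra.
Qed.
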